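(* Let $G=(V,E)$ be a simple undirected graph with $V=\{0,1,\dots,n-1\}$, and let $P\ge 1$ be an integer (the number of processors). Run the space-efficient parallel triangle-counting algorithm (described in the context) on $G$ with $P$ processors. Then the value $T=\sum_{i=0}^{P-1}T_i$ returned by the algorithm equals the exact number of triangles in $G$.
   Context: A triangle in $G$ is a set of three nodes $\{u,v,w\}$ such that $(u,v),(v,w),(w,u)\in E$. For $v\in V$ let $d_v$ be its degree. Define the total order $\prec$ on $V$ by $u\prec v$ iff $d_u<d_v$, or $d_u=d_v$ and $u<v$. For each $v\in V$ let $N_v=\{u: (u,v)\in E,\ v\prec u\}$ (the neighbors of $v$ that are higher in the order $\prec$), stored as a list sorted in ascending order. The algorithm: the node set $V$ is partitioned into $P$ pairwise disjoint sets $V_0,\dots,V_{P-1}$, each consisting of consecutive node labels, with $\bigcup_k V_k=V$. Processor $i$ stores $N_v$ for all $v\in V_i$ and maintains a counter $T_i$, initially $0$. For each $v\in V_i$ and each $u\in N_v$: if $u\in V_i$, processor $i$ adds $|N_v\cap N_u|$ to $T_i$; if $u\in V_j$ with $j\neq i$, processor $i$ sends the list $N_v$ to processor $j$, unless it has already sent $N_v$ to processor $j$ (so for each $v$, $N_v$ is sent at most once to each other processor). Whenever a processor $j$ receives a list $X$ (i.e. $X=N_v$ for some $v$ in another part), it adds $\sum_{u\in X,\ u\in V_j}|N_u\cap X|$ to $T_j$. Every processor processes all messages sent to it (processors broadcast completion notices and each waits until all others have completed and all messages are processed). Finally the algorithm returns $T=\sum_i T_i$. *)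

(* Defs.v *)
From mathcomp Require Import all_boot all_order.
Set Implicit Arguments. Unset Strict Implicit. Unset Printing Implicit Defensive.

Section Triangles.
Variables (n P : nat) (e : rel 'I_n) (part : 'I_n -> 'I_P).

Definition simple_graph := symmetric e /\ irreflexive e.

(* part v = k  iff  v \in V_k ; each V_k consists of consecutive labels *)
Definition consecutive_parts :=
  forall u w v : 'I_n, u <= w -> w <= v -> part u = part v -> part w = part u.

Definition deg (v : 'I_n) : nat := #|[set u | e v u]|.

Definition prec (u v : 'I_n) : bool :=
  (deg u < deg v) || ((deg u == deg v) && (u < v)).

(* N_v, sorted ascending (enum 'I_n is ascending) *)
Definition Nb (v : 'I_n) : seq 'I_n := [seq u <- enum 'I_n | e v u && prec v u].

(* |X ∩ Y| for duplicate-free lists *)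
Definition inter_size (X Y : seq 'I_n) : nat := count (fun w => w \in Y) X.

(* state of processor i: (T_i, list of already sent (v, j), outbox of (j, N_v)) *)
Definition pstate := (nat * seq ('I_n * 'I_P) * seq ('I_P * seq 'I_n))%type.

Definition proc_step (i : 'I_P) (v : 'I_n) (st : pstate) (u : 'I_n) : pstate :=
  let: (Ti, sent, out) := st in
  if part u == i then (Ti + inter_size (Nb v) (Nb u), sent, out)
  else if (v, part u) \in sent then (Ti, sent, out)
  else (Ti, (v, part u) :: sent, (part u, Nb v) :: out).

Definition proc_run (i : 'I_P) : pstate :=
  foldl (fun st v => foldl (proc_step i v) st (Nb v))
        (0, [::], [::]) [seq v <- enum 'I_n | part v == i].

Definition all_messages : seq ('I_P * seq 'I_n) :=
  flatten [seq (proc_run i).2 | i <- enum 'I_P].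

(* contribution to T_j of receiving list X *)
Definition receive_value (j : 'I_P) (X : seq 'I_n) : nat :=
  \sum_(u <- X | part u == j) inter_size (Nb u) X.

Definition T_final (j : 'I_P) : nat :=
  (proc_run j).1.1 +
  \sum_(m <- all_messages | m.1 == j) receive_value j m.2.

Definition algorithm_T : nat := \sum_(i < P) T_final i.

Definition triangle_count : nat :=
  #|[set t : {set 'I_n} | (#|t| == 3) &&
      [forall u in t, forall v in t, (u != v) ==> e u v]]|.

End Triangles.

(* Main.v *)
Require Import Defs.
From mathcomp Require Import all_boot all_order.
From mathcomp Require Import zify.
Set Implicit Arguments. Unset Strict Implicit. Unset Printing Implicit Defensive.

Section Pf.
Variables (n P : nat) (e : rel 'I_n) (part : 'I_n -> 'I_P).

Definition sumOut (out : seq ('I_P * seq 'I_n)) :=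
  \sum_(m <- out) receive_value e part m.1 m.2.

Lemma inner_run (i : 'I_P) (v : 'I_n) us T sent out :
  let st := foldl (proc_step e part i v) (T, sent, out) us in
  st.1.1 + sumOut st.2 =
    T + sumOut out + \sum_(u <- us | part u == i) inter_size (Nb e v) (Nb e u)
    + \sum_(j : 'I_P | (j \in [seq part u | u <- us & part u != i]) && ((v, j) \notin sent))
        receive_value e part j (Nb e v)
  /\ (forall p, p.1 != v -> (p \in st.1.2) = (p \in sent)).
Proof.
elim: us T sent out => [|u us IH] T sent out /=.
  by rewrite big_nil big_pred0 ?addn0.
have [Hpu|Hpu] := eqVneq (part u) i.
  have [H1 H2] := IH (T + inter_size (Nb e v) (Nb e u)) sent out.
  rewrite /=.
  split => //; rewrite H1 big_cons Hpu eqxx /=; lia.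
case Hs: ((v, part u) \in sent).
  have [H1 H2] := IH T sent out.
  split => //; rewrite H1 big_cons (negbTE Hpu); congr (_ + _).
  apply: eq_bigl => j; rewrite inE.
  by case: eqP => // ->; rewrite Hs andbF.
have [H1 H2] := IH T ((v, part u) :: sent) ((part u, Nb e v) :: out).
split; last first.
  move=> p Hp; rewrite H2 // inE; case: eqP => // Ep.
  by rewrite Ep eqxx in Hp.
rewrite H1 big_cons (negbTE Hpu) /sumOut big_cons /=.
rewrite [in RHS](bigD1 (part u)) /=; last by rewrite inE eqxx Hs.
have -> : \sum_(j | (j \in [seq part u0 | u0 <- us & part u0 != i]) &&
                   ((v, j) \notin (v, part u) :: sent)) receive_value e part j (Nb e v)
  = \sum_(j | ((j \in part u :: [seq part u0 | u0 <- us & part u0 != i]) &&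
                   ((v, j) \notin sent)) && (j != part u)) receive_value e part j (Nb e v).
  apply: eq_bigl => j; rewrite !inE xpair_eqE eqxx /=.
  by case: (j =P part u) => [->|]; rewrite ?andbF ?andbT //= ?orbF.
rewrite /sumOut; set a := \sum_(j | _) _; set b := \sum_(j <- out) _; set c := \sum_(j <- us | _) _; set d := receive_value _ _ _ _. lia.
Qed.

Definition local (i : 'I_P) v := \sum_(u <- Nb e v | part u == i) inter_size (Nb e v) (Nb e u).
Definition remote (i : 'I_P) v (sent : seq ('I_n * 'I_P)) := \sum_(j | (j \in [seq part u | u <- Nb e v & part u != i]) && ((v,j) \notin sent)) receive_value e part j (Nb e v).

Lemma outer_run i vs T sent out : uniq vs ->
 let st := foldl (fun st v => foldl (proc_step e part i v) st (Nb e v)) (T,sent,out) vs in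
 st.1.1 + sumOut st.2 = T + sumOut out + \sum_(v <- vs) (local i v + remote i v sent).
Proof.
elim: vs T sent out => [|v vs IH] T sent out /=; first by rewrite big_nil addn0.
move/andP=> [Hv Hu].
case E: (foldl (proc_step e part i v) (T,sent,out) (Nb e v)) => [[T' sent'] out'].
have [H1 H2] := inner_run i v (Nb e v) T sent out.
rewrite E /= in H1 H2.
rewrite IH // big_cons.
have -> : \sum_(v' <- vs) (local i v' + remote i v' sent') = \sum_(v' <- vs) (local i v' + remote i v' sent).
  apply: eq_big_seq => v' Hv'; congr (_ + _); apply: eq_bigl => j.
  rewrite H2 //=; apply: contraNneq Hv => <-; done.
have H1' : T' + sumOut out' = T + sumOut out + local i v + remote i v sent by exact H1.
by rewrite H1' -!addnA.
Qed.

End Pf.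

Section Pf2.
Variables (n : nat) (e : rel 'I_n).

Definition rk (v : 'I_n) := deg e v * n + v.

Lemma precE u v : prec e u v = (rk u < rk v).
Proof.
rewrite /prec /rk.
have Hu := ltn_ord u; have Hv := ltn_ord v.
case: (ltngtP (deg e u) (deg e v)) => H /=.
- symmetry; apply/idP.
  have : (deg e u).+1 * n <= deg e v * n by rewrite leq_mul2r H orbT.
  rewrite mulSn; lia.
- apply/esym/negbTE; rewrite -leqNgt.
  have : (deg e v).+1 * n <= deg e u * n by rewrite leq_mul2r H orbT.
  rewrite mulSn; lia.
- by rewrite H ltn_add2l.
Qed.

Lemma rk_inj u v : rk u = rk v -> u = v.
Proof.
move=> H; apply/val_inj => /=.
have := precE u v; have := precE v u; rewrite H ltnn /prec.
case: (ltngtP (deg e u) (deg e v)) => //= Hd _ _.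
move: H; rewrite /rk Hd; lia.
Qed.

Lemma card3 (a b c : 'I_n) : a != b -> a != c -> b != c -> #|[set a; b; c]| = 3.
Proof.
move=> ab ac bc.
rewrite -setUA cardsU1 cards2 !inE (negbTE ab) (negbTE ac) bc.
done.
Qed.

Definition tri3 (x : 'I_n * 'I_n * 'I_n) : bool :=
  (e x.1.1 x.1.2 && prec e x.1.1 x.1.2) &&
  (e x.1.1 x.2 && prec e x.1.1 x.2 && e x.1.2 x.2 && prec e x.1.2 x.2).

Lemma tri_card : simple_graph e -> #|[set x | tri3 x]| = triangle_count e.
Proof.
move=> [Hsym Hirr].
have injf : {in [set x | tri3 x] &, injective (fun x : 'I_n * 'I_n * 'I_n => [set x.1.1; x.1.2; x.2])}.
  move=> [[a b] c] [[a' b'] c']; rewrite !inE /tri3 /= !precE.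
  move=> /andP[/andP[_ H1] /andP[/andP[/andP[_ H2] _] H3]].
  move=> /andP[/andP[_ H1'] /andP[/andP[/andP[_ H2'] _] H3']] E.
  have Ha : a \in [set a'; b'; c'] by rewrite -E !inE eqxx.
  have Hb : b \in [set a'; b'; c'] by rewrite -E !inE eqxx orbT.
  have Hc : c \in [set a'; b'; c'] by rewrite -E !inE eqxx !orbT.
  rewrite !inE in Ha Hb Hc.
  case/orP: Ha => [/orP[|]|] /eqP ?; subst;
  case/orP: Hb => [/orP[|]|] /eqP ?; subst;
  case/orP: Hc => [/orP[|]|] /eqP ?; subst; first [done | exfalso; lia].
rewrite /triangle_count -(card_in_imset injf); apply: eq_card => t.
rewrite inE; apply/imsetP/andP.
  case=> [[[a b] c]]; rewrite inE /tri3 /= !precE.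
  move=> /andP[/andP[Hab H1] /andP[/andP[/andP[Hac H2] Hbc] H3]] ->.
  split.
    rewrite card3 //; apply/eqP => E; subst; lia.
  apply/forallP => x; apply/implyP; rewrite !inE => Hx.
  apply/forallP => y; apply/implyP; rewrite !inE => Hy.
  apply/implyP => Hxy.
  case/orP: Hx => [/orP[|]|] /eqP ?; subst;
  case/orP: Hy => [/orP[|]|] /eqP ?; subst; rewrite ?eqxx // in Hxy;
  by rewrite // Hsym.
move=> [Hc Hadj].
have adj : forall x y, x \in t -> y \in t -> x != y -> e x y.
  move=> x y Hx Hy Hxy; move/forallP: Hadj => /(_ x); rewrite Hx /=.
  by move/forallP => /(_ y); rewrite Hy Hxy.
have : size (enum t) = 3 by rewrite -cardE; apply/eqP.
have Hu := enum_uniq (mem t).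
have Ht : t = [set x in enum t] by rewrite set_enum.
case E: (enum t) => [|a [|b [|c [|]]]] //= _.
rewrite E in Hu Ht.
have Hta : a \in t by rewrite Ht !inE eqxx.
have Htb : b \in t by rewrite Ht !inE eqxx orbT.
have Htc : c \in t by rewrite Ht !inE eqxx !orbT.
move: Hu; rewrite /= !inE !negb_or => /andP[/andP[ab ac] /andP[bc _]].
have rab : rk a != rk b by apply: contra ab => /eqP/rk_inj ->.
have rac : rk a != rk c by apply: contra ac => /eqP/rk_inj ->.
have rbc : rk b != rk c by apply: contra bc => /eqP/rk_inj ->.
have Hset : t = [set a; b; c].
  rewrite Ht; apply/setP => z; rewrite !inE. by rewrite orbA.
have eab := adj _ _ Hta Htb ab; have eac := adj _ _ Hta Htc ac;
have ebc := adj _ _ Htb Htc bc.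
have eba : e b a by rewrite Hsym.
have eca : e c a by rewrite Hsym.
have ecb : e c b by rewrite Hsym.
have perm : forall x y z : 'I_n, [set x; y; z] = [set a; b; c] ->
   (rk x < rk y) -> (rk x < rk z) -> (rk y < rk z) -> e x y -> e x z -> e y z ->
   exists2 p, p \in [set p | tri3 p] & t = [set p.1.1; p.1.2; p.2].
  move=> x y z Exyz H1 H2 H3 E1 E2 E3; exists ((x, y), z).
    by rewrite inE /tri3 /= !precE E1 E2 E3 H1 H2 H3.
  by rewrite Hset /= Exyz.
have sP : forall x y z : 'I_n, [set x; y; z] = [set y; x; z] /\ [set x; y; z] = [set x; z; y].
  by move=> x y z; split; apply/setP => w; rewrite !inE;
     case: (w == x); case: (w == y); case: (w == z).
case: (ltngtP (rk a) (rk b)) => [lab|lab|]; last by move/eqP; rewrite (negbTE rab).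
- case: (ltngtP (rk b) (rk c)) => [lbc|lbc|]; last by move/eqP; rewrite (negbTE rbc).
  + apply: (perm a b c) => //; try (by apply: ltn_trans; eassumption); by apply/setP => w; rewrite !inE; case: (w == a); case: (w == b); case: (w == c).
  + case: (ltngtP (rk a) (rk c)) => [lac|lac|]; last by move/eqP; rewrite (negbTE rac).
    * apply: (perm a c b) => //; try (by apply: ltn_trans; eassumption); by apply/setP => w; rewrite !inE; case: (w == a); case: (w == b); case: (w == c).
    * apply: (perm c a b) => //; try (by apply: ltn_trans; eassumption); by apply/setP => w; rewrite !inE; case: (w == a); case: (w == b); case: (w == c).
- case: (ltngtP (rk a) (rk c)) => [lac|lac|]; last by move/eqP; rewrite (negbTE rac).
  + apply: (perm b a c) => //; try (by apply: ltn_trans; eassumption); by apply/setP => w; rewrite !inE; case: (w == a); case: (w == b); case: (w == c).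
  + case: (ltngtP (rk b) (rk c)) => [lbc|lbc|]; last by move/eqP; rewrite (negbTE rbc).
    * apply: (perm b c a) => //; try (by apply: ltn_trans; eassumption); by apply/setP => w; rewrite !inE; case: (w == a); case: (w == b); case: (w == c).
    * apply: (perm c b a) => //; try (by apply: ltn_trans; eassumption); by apply/setP => w; rewrite !inE; case: (w == a); case: (w == b); case: (w == c).
Qed.
End Pf2.

Lemma sum_enum (T : finType) (F : T -> nat) : \sum_(i <- enum T) F i = \sum_i F i.
Proof. by rewrite big_enum. Qed.

Lemma sum_enum_cond (T : finType) (p : pred T) (F : T -> nat) :
  \sum_(i <- enum T | p i) F i = \sum_(i | p i) F i.
Proof. by rewrite big_enum_cond. Qed.

Section Main.
Variables (n P : nat) (e : rel 'I_n) (part : 'I_n -> 'I_P).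

Definition K (v u : 'I_n) := count (fun w => e v w && prec e v w && e u w && prec e u w) (enum 'I_n).
Definition G v := \sum_(u <- Nb e v) K v u.

Lemma interK v u : inter_size (Nb e v) (Nb e u) = K v u.
Proof.
rewrite /inter_size /K {1}/Nb count_filter; apply: eq_count => w /=.
by rewrite /Nb mem_filter mem_enum andbT andbC !andbA.
Qed.

Lemma interK' v u : inter_size (Nb e u) (Nb e v) = K v u.
Proof.
rewrite /inter_size /K {1}/Nb count_filter; apply: eq_count => w /=.
by rewrite /Nb mem_filter mem_enum andbT !andbA.
Qed.

Lemma loc_rem i v : local e part i v + remote e part i v [::] = G v.
Proof.
rewrite /G.
have -> : local e part i v = \sum_(u <- Nb e v | part u == i) K v u.
  by apply: eq_bigr => u _; rewrite interK.
have -> : remote e part i v [::] = \sum_(j | j \in [seq part u | u <- Nb e v & part u != i])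
     \sum_(u <- Nb e v | part u == j) K v u.
  rewrite /remote; apply: eq_big => j; first by rewrite in_nil andbT.
  by move=> _; apply: eq_bigr => u _; exact: interK'.
have -> : \sum_(j | j \in [seq part u | u <- Nb e v & part u != i])
     \sum_(u <- Nb e v | part u == j) K v u = \sum_(u <- Nb e v | part u != i) K v u.
  rewrite [RHS](partition_big part xpredT) // [LHS]big_mkcond /=.
  apply: eq_bigr => j _; case: ifP => Hj.
    have ji : j != i.
      by move/mapP: Hj => [u]; rewrite mem_filter => /andP[Hu _] ->.
    apply: eq_bigl => u; case: eqP => [->|]; by rewrite ?andbF ?andbT.
  symmetry; apply: big1_seq => u /andP[/andP[H1 H2] H3]; exfalso.
  have : part u \in [seq part u | u <- Nb e v & part u != i] by apply: map_f; rewrite mem_filter H1.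
  by rewrite (eqP H2) Hj.
by rewrite [RHS](bigID (fun u => part u == i)).
Qed.

Lemma procval i : (proc_run e part i).1.1 + sumOut e part (proc_run e part i).2
  = \sum_(v <- enum 'I_n | part v == i) G v.
Proof.
have := outer_run e part i 0 (@nil ('I_n * 'I_P)) (@nil ('I_P * seq 'I_n))
   (filter_uniq (fun v => part v == i) (enum_uniq 'I_n)).
rewrite /proc_run /= => ->.
rewrite /sumOut big_nil big_filter.
by apply: eq_bigr => v _; rewrite loc_rem.
Qed.

Lemma algT : algorithm_T e part = \sum_(v <- enum 'I_n) G v.
Proof.
rewrite /algorithm_T /T_final big_split /=.
have E2 : \sum_(i < P) \sum_(m <- all_messages e part | m.1 == i) receive_value e part i m.2
   = \sum_i sumOut e part (proc_run e part i).2.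
  transitivity (\sum_(m <- all_messages e part) receive_value e part m.1 m.2).
    rewrite [RHS](partition_big fst xpredT) //.
    apply: eq_bigr => j _; apply: eq_big => [m //|m /eqP ->//].
  by rewrite /all_messages big_flatten big_map sum_enum.
rewrite E2 -big_split /=.
under eq_bigr => i _ do rewrite procval.
by rewrite [RHS](partition_big part xpredT).
Qed.

Lemma S_card : \sum_(v <- enum 'I_n) G v = #|[set x | tri3 e x]|.
Proof.
rewrite sum_enum /G.
under eq_bigr => v _ do rewrite /Nb big_filter sum_enum_cond.
under eq_bigr => v _ do under eq_bigr => u _ do rewrite /K -sum1_count sum_enum_cond.
rewrite pair_big_dep pair_big_dep sum1dep_card.
by apply: eq_card => x; rewrite !inE.
Qed.

End Main.

Theorem theorem1 (n P : nat) (e : rel 'I_n) (part : 'I_n -> 'I_P) :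
  simple_graph e -> 0 < P -> consecutive_parts part ->
  algorithm_T e part = triangle_count e.
Proof.
move=> Hs _ _.
by rewrite algT S_card tri_card.
Qed.
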